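(* Let $$A=\begin{pmatrix} 0 & z & -y\\ -z & 0 & x\\ y & -x & 0\end{pmatrix}$$ be a matrix over the polynomial ring $\mathbb{R}[x,y,z]$. Then $A$ is not algebraically shift equivalent over $\mathbb{R}[x,y,z]$ to any nonsingular square matrix over $\mathbb{R}[x,y,z]$. In particular, $A$ is a non-nilpotent matrix over $\mathbb{R}[x,y,z]=\mathbb{R}[x][y,z]$ that is not algebraically shift equivalent to a nonsingular matrix.
   Context: A square matrix over the domain $\mathbb{R}[x,y,z]$ is nonsingular if its determinant is nonzero. Two square matrices $A$ (of order $p$) and $B$ (of order $q$) over a commutative ring $R$ are algebraically shift equivalent of lag $l\in\mathbb{N}$ over $R$ if there exist a $p\times q$ matrix $U$ and a $q\times p$ matrix $V$ over $R$ with $AU=UB$, $VA=BV$, $A^l=UV$ and $B^l=VU$; they are algebraically shift equivalent if this holds for some $l\in\mathbb{N}$. *)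

(* Defs.v *)
(* real numbers as an abstract [realType] (the complete
   archimedean ordered field, i.e. R up to isomorphism), polynomial ring
   R[x,y,z] as multinomials' {mpoly R[3]}. *)
From HB Require Import structures.
From mathcomp Require Import all_boot all_order all_algebra.
From mathcomp Require Import reals.
From mathcomp Require Import mpoly.
Set Implicit Arguments. Unset Strict Implicit. Unset Printing Implicit Defensive.
Import Order.TTheory GRing.Theory Num.Theory.
Local Open Scope ring_scope.

Definition alg_shift_equiv_lag (S : comNzRingType) (p q : nat)
  (A : 'M[S]_p) (B : 'M[S]_q) (l : nat) : Prop :=
  exists (U : 'M[S]_(p, q)) (V : 'M[S]_(q, p)),
    [/\ A *m U = U *m B, V *m A = B *m V, A ^+ l = U *m V & B ^+ l = V *m U].

Definition alg_shift_equiv (S : comNzRingType) (p q : nat)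
  (A : 'M[S]_p) (B : 'M[S]_q) : Prop :=
  exists l : nat, alg_shift_equiv_lag A B l.

Definition nonsingular (S : comNzRingType) (q : nat) (B : 'M[S]_q) : bool :=
  \det B != 0.

Definition varx (R : realType) : {mpoly R[3]} := 'X_(inord 0).
Definition vary (R : realType) : {mpoly R[3]} := 'X_(inord 1).
Definition varz (R : realType) : {mpoly R[3]} := 'X_(inord 2).

Definition matA (R : realType) : 'M[{mpoly R[3]}]_3 :=
  let x := varx R in let y := vary R in let z := varz R in
  \matrix_(i < 3, j < 3)
    nth 0 (nth [::] [:: [:: 0; z; - y]; [:: - z; 0; x]; [:: y; - x; 0]] i) j.

(* Main.v *)
Require Import Defs.
From HB Require Import structures.
From mathcomp Require Import all_boot all_order all_algebra.
From mathcomp Require Import reals.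
From mathcomp Require Import mpoly.
From mathcomp Require Import fraction.
From mathcomp Require Import boolp classical_sets topology normedtype trigo derive.
From mathcomp Require Import ring lra zify.
Set Implicit Arguments. Unset Strict Implicit. Unset Printing Implicit Defensive.
Import Order.TTheory GRing.Theory Num.Theory.
Import numFieldNormedType.Exports.
Local Open Scope ring_scope.
Section Wind.
Variable R : realFieldType.
Implicit Types a b c d : R * R.

Definition quad a : nat :=
  if (0 < a.1) && (0 <= a.2) then 0%N
  else if (a.1 <= 0) && (0 < a.2) then 1%N
  else if (a.1 < 0) && (a.2 <= 0) then 2%N else 3%N.

Definition dl (m n : int) : int :=
  let d := ((n - m) %% 4)%Z in
  if d == 0 then 0 else if d == 1 then 1 else if d == 2 then 2 else -1.

Definition del a b : int := dl (quad a) (quad b).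
Definition dot a b : R := a.1 * b.1 + a.2 * b.2.

Lemma dl_tri (m n k : nat) : (m < 4)%N -> (n < 4)%N -> (k < 4)%N ->
  dl m n != 2 -> dl n k != 2 -> dl k m != 2 -> dl m n + dl n k + dl k m = 0.
Proof.
by case: m => [|[|[|[|]]]] //; case: n => [|[|[|[|]]]] //;
  case: k => [|[|[|[|]]]].
Qed.

Lemma dl_anti (m n : nat) : (m < 4)%N -> (n < 4)%N -> dl m n != 2 ->
  dl n m = - dl m n.
Proof. by case: m => [|[|[|[|]]]] //; case: n => [|[|[|[|]]]]. Qed.

Lemma quad_lt4 a : (quad a < 4)%N.
Proof. by rewrite /quad; repeat case: ifP. Qed.

Lemma quadP a : [\/ quad a = 0%N /\ (0 < a.1 /\ 0 <= a.2),
  quad a = 1%N /\ (a.1 <= 0 /\ 0 < a.2),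
  quad a = 2%N /\ (a.1 < 0 /\ a.2 <= 0) |
  quad a = 3%N /\ (0 <= a.1 /\ a.2 <= 0)].
Proof.
rewrite /quad; case: ifPn => [/andP[h1 h2]|]; first by constructor 1.
rewrite negb_and -!ltNge => h0.
case: ifPn => [/andP[h1 h2]|]; first by constructor 2.
rewrite negb_and -!ltNge => h3.
case: ifPn => [/andP[h1 h2]|]; first by constructor 3.
rewrite negb_and -!leNgt => h4.
constructor 4; split => //.
case/orP: h0 => h0; case/orP: h3 => h3; case/orP: h4 => h4; split; lra.
Qed.

Lemma del_ne2 a b : 0 < dot a b -> del a b != 2.
Proof.
rewrite /del /dot => H.
case: (quadP a) => [][-> [h1 h2]]; case: (quadP b) => [][-> [g1 g2]] //;
  exfalso; nra.
Qed.

Lemma del_anti a b : 0 < dot a b -> del b a = - del a b.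
Proof. by move=> H; apply: dl_anti; rewrite ?quad_lt4 ?del_ne2. Qed.

Lemma dotC a b : dot a b = dot b a.
Proof. by rewrite /dot mulrC [a.2 * _]mulrC. Qed.

Lemma del_tri a b c : 0 < dot a b -> 0 < dot b c -> 0 < dot c a ->
  del a b + del b c + del c a = 0.
Proof. by move=> h1 h2 h3; apply: dl_tri; rewrite ?quad_lt4 ?del_ne2. Qed.

Lemma del_sq a b c d : 0 < dot a b -> 0 < dot b c -> 0 < dot c d ->
  0 < dot d a -> 0 < dot a c ->
  del a b + del b c - del d c - del a d = 0.
Proof.
move=> hab hbc hcd hda hac.
have hca : 0 < dot c a by rewrite dotC.
have hdc : 0 < dot d c by rewrite dotC.
have had : 0 < dot a d by rewrite dotC.
have t1 := del_tri hab hbc hca.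
have t2 := del_tri hac hcd hda.
rewrite (del_anti hac) in t1.
rewrite (del_anti hdc) (del_anti had) in t2.
have: (del a b + del b c - del a c) + (del a c - del d c - del a d) = 0 by rewrite t1 t2 addr0.
by move=> <-; ring.
Qed.

Lemma grid_wind (N : nat) (P : nat -> nat -> R * R) :
  (forall i j, (i < N)%N -> (j < N)%N ->
    [/\ 0 < dot (P i j) (P i.+1 j), 0 < dot (P i.+1 j) (P i.+1 j.+1),
        0 < dot (P i.+1 j.+1) (P i j.+1), 0 < dot (P i j.+1) (P i j) &
        0 < dot (P i j) (P i.+1 j.+1)]) ->
  (forall j, P N j = P 0%N j) ->
  \sum_(i < N) del (P i 0%N) (P i.+1 0%N) = \sum_(i < N) del (P i N) (P i.+1 N).
Proof.
move=> Hc Hp.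
pose S j := \sum_(i < N) del (P i j) (P i.+1 j).
suff: forall j, (j <= N)%N -> S j = S 0%N by move=> /(_ N (leqnn N)); rewrite /S => ->.
elim=> [//|j IH] hj.
rewrite -IH ?(ltnW hj) // /S.
apply/eqP; rewrite -subr_eq0 -sumrB.
have ->: \sum_(i < N) (del (P i j.+1) (P i.+1 j.+1) - del (P i j) (P i.+1 j)) =
  \sum_(i < N) (del (P i.+1 j) (P i.+1 j.+1) - del (P i j) (P i j.+1)).
  apply: eq_bigr => i _.
  have [h1 h2 h3 h4 h5] := Hc i j (ltn_ord i) hj.
  have := del_sq h1 h2 h3 h4 h5.
  move=> E; apply/eqP; rewrite -subr_eq0; apply/eqP.
  lia.
rewrite -(big_mkord xpredT (fun k => del (P k.+1 j) (P k.+1 j.+1) - del (P k j) (P k j.+1))).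
rewrite (telescope_sumr (fun k => del (P k j) (P k j.+1))) //.
by rewrite !Hp subrr.
Qed.
End Wind.
Section Loop.
Variable R : realType.

Ltac quadtac := rewrite /quad /=;
  repeat (case: ifP => [/andP[? ?]|?]; try (exfalso; lra)); try done;
  repeat match goal with H : (_ && _) = false |- _ => move/negbT: H; rewrite negb_and -?ltNge -?leNgt => /orP[] ? end;
  exfalso; lra.
Lemma quad_eq0 (x y : R) : 0 < x -> 0 <= y -> quad (x, y) = 0%N.
Proof. by move=> h1 h2; rewrite /quad /= h1 h2. Qed.
Lemma quad_eq1 (x y : R) : x <= 0 -> 0 < y -> quad (x, y) = 1%N.
Proof. move=> h1 h2; quadtac. Qed.
Lemma quad_eq2 (x y : R) : x < 0 -> y <= 0 -> quad (x, y) = 2%N.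
Proof. move=> h1 h2; quadtac. Qed.
Lemma quad_eq3 (x y : R) : 0 <= x -> y < 0 -> quad (x, y) = 3%N.
Proof. move=> h1 h2; quadtac. Qed.

Lemma trig_per (f : R -> R) (x : R) (m : int) : periodic f (pi *+ 2) ->
  f (x + m%:~R * (pi *+ 2)) = f x.
Proof.
move=> hf; case: m => n.
  have -> : (Posz n)%:~R * (pi *+ 2) = (pi *+ 2) *+ n :> R.
    by rewrite -pmulrn mulrC mulr_natr.
  exact: periodicn.
rewrite NegzE.
have -> : (- Posz n.+1)%:~R * (pi *+ 2) = - ((pi *+ 2) *+ n.+1) :> R.
  by rewrite mulrNz -pmulrn mulNr mulrC mulr_natr.
by rewrite -{2}[x](subrK ((pi *+ 2) *+ n.+1)) (periodicn hf).
Qed.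

Lemma pihalf_gt0 : 0 < pi / 2 :> R.
Proof. by rewrite divr_gt0 // pi_gt0. Qed.

Lemma quad_trig (rho t : R) : 0 < rho ->
  (quad (rho * cos t, rho * sin t))%:Z = (Num.floor (t / (pi / 2)) %% 4)%Z.
Proof.
move=> hr.
have hp := pihalf_gt0; have hpi := @pi_gt0 R.
set k := Num.floor (t / (pi / 2)).
have /andP[hk1 hk2] := archimedean.Num.Theory.floor_itv (t / (pi / 2)); rewrite -/k in hk1 hk2.
set s := t - k%:~R * (pi / 2).
have ty : t = (t / (pi / 2)) * (pi / 2) by rewrite divfK // gt_eqF.
move: hk2; rewrite intrD => hk2.
have s0 : 0 <= s by rewrite /s {1}ty; nra.
have s1 : s < pi / 2 by rewrite /s {1}ty; nra.
have hkd := divz_eq k 4.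
set m := (k %/ 4)%Z in hkd; set r := (k %% 4)%Z in hkd *.
have r0 : 0 <= r by rewrite modz_ge0.
have r4 : r < 4 by rewrite ltz_pmod.
have ht : t = (s + r%:~R * (pi / 2)) + m%:~R * (pi *+ 2).
  rewrite /s {1}hkd intrD intrM /=; rewrite mulr2n.
  have -> : (4%:~R : R) = 4 by [].
  by field.
have cs0 : 0 < cos s by apply: cos_gt0_pihalf; apply/andP; split; lra.
have sn0 : 0 <= sin s by apply: sin_ge0_pi; apply/andP; split; lra.
rewrite ht (trig_per _ _ (@cosD2pi R)) (trig_per _ _ (@sinD2pi R)).
case: r r0 r4 {hkd ht} => // n _ hn.
case: n hn => [|[|[|[|]]]] // _.
- by rewrite mul0r addr0 quad_eq0 //; nra.
- by rewrite mul1r cosDpihalf sinDpihalf quad_eq1 //; nra.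
- have -> : (Posz 2)%:~R * (pi / 2) = pi / 2 + pi / 2 :> R.
    by rewrite -pmulrn; ring.
  by rewrite addrA cosDpihalf sinDpihalf sinDpihalf cosDpihalf quad_eq2 //; nra.
- have -> : (Posz 3)%:~R * (pi / 2) = pi / 2 + pi / 2 + pi / 2 :> R.
    by rewrite -pmulrn; ring.
  by rewrite !addrA !cosDpihalf !sinDpihalf !cosDpihalf opprK sinDpihalf quad_eq3 //; nra.
Qed.

Lemma dl_step (a b : int) : `|b - a| <= 1 -> dl (a %% 4)%Z (b %% 4)%Z = b - a.
Proof.
move=> h.
have E : (((b %% 4)%Z - (a %% 4)%Z) %% 4)%Z = ((b - a) %% 4)%Z.
  by rewrite modzDml -modzDmr modzNm modzDmr.
rewrite /dl E.
have : b - a = -1 \/ b - a = 0 \/ b - a = 1 by lia.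
by case=> [->|[->|->]].
Qed.

Lemma floor_step (x y : R) : `|y - x| < 1 ->
  `|Num.floor y - Num.floor x| <= 1.
Proof.
move=> h.
have /andP[hx1 hx2] := archimedean.Num.Theory.floor_itv x.
have /andP[hy1 hy2] := archimedean.Num.Theory.floor_itv y.
have h1 : Num.floor y < Num.floor x + 2.
  rewrite archimedean.Num.Theory.floor_lt_int intrD.
  move: hx2 h; rewrite intrD => hx2 h.
  have : y - x < 1 by apply: le_lt_trans h; exact: ler_norm.
  have -> : (2%:~R : R) = 1 + 1 by [].
  lra.
have h2 : Num.floor x < Num.floor y + 2.
  rewrite archimedean.Num.Theory.floor_lt_int intrD.
  move: hy2 h; rewrite intrD => hy2 h.
  have : x - y < 1 by apply: le_lt_trans h; rewrite distrC; exact: ler_norm.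
  have -> : (2%:~R : R) = 1 + 1 by [].
  lra.
lia.
Qed.

Lemma loop_wind (rho : R) (t : nat -> R) (N : nat) (e : int) : 0 < rho ->
  (forall i, (i < N)%N -> `|t i.+1 - t i| < pi / 2) ->
  t N = t 0%N + e%:~R * (pi *+ 2) ->
  \sum_(i < N) del (rho * cos (t i), rho * sin (t i))
                   (rho * cos (t i.+1), rho * sin (t i.+1)) = 4 * e.
Proof.
move=> hr hs hN.
have hp := pihalf_gt0.
pose k i := Num.floor (t i / (pi / 2)).
transitivity (\sum_(i < N) (k i.+1 - k i)).
  apply: eq_bigr => i _.
  rewrite /del (quad_trig _ hr) (quad_trig _ hr) dl_step //.
  apply: floor_step.
  rewrite -mulrBl normrM [`|(pi / 2)^-1|]gtr0_norm ?invr_gt0 //.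
  by rewrite ltr_pdivrMr // mul1r; apply: hs.
rewrite -(big_mkord xpredT (fun i => k i.+1 - k i)) telescope_sumr //.
rewrite /k hN.
have -> : (t 0%N + e%:~R * (pi *+ 2)) / (pi / 2) = t 0%N / (pi / 2) + (4 * e)%:~R.
  move: (t 0%N) (@pi_gt0 R); move: (@pi R) => x a hx.
  rewrite intrM mulr2n; have -> : (4%:~R : R) = 4 by [].
  by field; rewrite gt_eqF.
rewrite archimedean.Num.Theory.floorDrz ?intr_int //.
by rewrite archimedean.Num.Theory.intrKfloor addrC addKr.
Qed.

End Loop.
Section Nice.
Variable R : realType.

Lemma lip_gen (f df : R -> R) :
  (forall x : R, is_derive x (1 : R) f (df x)) -> continuous f ->
  (forall x, `|df x| <= 1) -> forall a b, `|f a - f b| <= `|a - b|.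
Proof.
move=> hd hc hb.
suff H : forall a b, a < b -> `|f b - f a| <= `|b - a|.
  move=> a b; case: (ltgtP a b) => [hab|hab|->]; last by rewrite !subrr normr0.
  - by rewrite distrC [`|a - b|]distrC; apply: H.
  - exact: H.
move=> a b hab.
have [c _ E] := MVT hab (fun x _ => hd x) (continuous_subspaceT hc).
rewrite E normrM; apply: ler_piMl => //; exact: hb.
Qed.

Lemma lip_cos a b : `|cos a - cos b| <= `|a - b| :> R.
Proof.
apply: (@lip_gen cos (fun x => - sin x)); try exact: continuous_cos.
by move=> x; rewrite normrN sin_max.
Qed.

Lemma lip_sin a b : `|sin a - sin b| <= `|a - b| :> R.
Proof.
apply: (@lip_gen sin cos); try exact: continuous_sin.
by move=> x; apply: cos_max.
Qed.

Definition nice (f : R -> R -> R) := exists M L : R, [/\ 0 <= M, 0 <= L &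
  forall a b a' b', `|f a b| <= M /\ `|f a b - f a' b'| <= L * (`|a - a'| + `|b - b'|)].

Lemma nice_ext f g : (forall a b, f a b = g a b) -> nice f -> nice g.
Proof.
move=> e [M [L [h1 h2 h3]]]; exists M, L; split=> // a b a' b'.
by rewrite -!e; apply: h3.
Qed.

Lemma nice_cst c : nice (fun _ _ => c).
Proof.
exists `|c|, 0; split=> // a b a' b'; split=> //.
by rewrite subrr normr0 mul0r.
Qed.

Lemma nice_add f g : nice f -> nice g -> nice (fun a b => f a b + g a b).
Proof.
move=> [M [L [h1 h2 h3]]] [M' [L' [g1 g2 g3]]].
exists (M + M'), (L + L'); split; rewrite ?addr_ge0 // => a b a' b'.
have [f1 f2] := h3 a b a' b'; have [e1 e2] := g3 a b a' b'.
split; first by apply: le_trans (ler_normD _ _) _; apply: lerD.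
have -> : f a b + g a b - (f a' b' + g a' b') = (f a b - f a' b') + (g a b - g a' b') by ring.
apply: le_trans (ler_normD _ _) _; rewrite mulrDl; exact: lerD.
Qed.

Lemma nice_opp f : nice f -> nice (fun a b => - f a b).
Proof.
move=> [M [L [h1 h2 h3]]]; exists M, L; split=> // a b a' b'.
by rewrite normrN -opprD normrN; apply: h3.
Qed.

Lemma nice_mul f g : nice f -> nice g -> nice (fun a b => f a b * g a b).
Proof.
move=> [M [L [h1 h2 h3]]] [M' [L' [g1 g2 g3]]].
exists (M * M'), (M * L' + M' * L); split; rewrite ?mulr_ge0 ?addr_ge0 ?mulr_ge0 // => a b a' b'.
have [f1 f2] := h3 a b a' b'; have [e1 e2] := g3 a b a' b'.
have [f1' _] := h3 a' b' a b; have [e1' _] := g3 a' b' a b.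
split; first by rewrite normrM; apply: ler_pM.
have -> : f a b * g a b - f a' b' * g a' b' =
  f a b * (g a b - g a' b') + g a' b' * (f a b - f a' b') by ring.
apply: le_trans (ler_normD _ _) _; rewrite !normrM mulrDl -!mulrA.
by apply: lerD; apply: ler_pM.
Qed.

Lemma nice_sum (I : Type) (s : seq I) (F : I -> R -> R -> R) :
  (forall i, nice (F i)) -> nice (fun a b => \sum_(i <- s) F i a b).
Proof.
move=> hF; elim: s => [|i s IH].
  by apply: nice_ext (nice_cst 0) => a b; rewrite big_nil.
by apply: nice_ext (nice_add (hF i) IH) => a b; rewrite big_cons.
Qed.

Lemma nice_prod (I : Type) (s : seq I) (F : I -> R -> R -> R) :
  (forall i, nice (F i)) -> nice (fun a b => \prod_(i <- s) F i a b).
Proof.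
move=> hF; elim: s => [|i s IH].
  by apply: nice_ext (nice_cst 1) => a b; rewrite big_nil.
by apply: nice_ext (nice_mul (hF i) IH) => a b; rewrite big_cons.
Qed.

Lemma nice_exp f n : nice f -> nice (fun a b => f a b ^+ n).
Proof.
move=> hf; elim: n => [|n IH].
  by apply: nice_ext (nice_cst 1) => a b; rewrite expr0.
by apply: nice_ext (nice_mul hf IH) => a b; rewrite exprS.
Qed.

Lemma nice_trig1 (f : R -> R) : (forall x, `|f x| <= 1) ->
  (forall x y, `|f x - f y| <= `|x - y|) -> nice (fun a b => f a).
Proof.
move=> h1 h2; exists 1, 1; split=> // a b a' b'; split=> //.
rewrite mul1r; apply: le_trans (h2 a a') _; rewrite lerDl //.
Qed.

Lemma nice_trig2 (f : R -> R) : (forall x, `|f x| <= 1) ->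
  (forall x y, `|f x - f y| <= `|x - y|) -> nice (fun a b => f b).
Proof.
move=> h1 h2; exists 1, 1; split=> // a b a' b'; split=> //.
rewrite mul1r; apply: le_trans (h2 b b') _; rewrite lerDr //.
Qed.

Lemma nice_ca : nice (fun a b => cos a).
Proof. apply: (@nice_trig1 cos) => [x|x y]; [exact: cos_max | exact: lip_cos]. Qed.
Lemma nice_sa : nice (fun a b => sin a).
Proof. apply: (@nice_trig1 sin) => [x|x y]; [exact: sin_max | exact: lip_sin]. Qed.
Lemma nice_cb : nice (fun a b => cos b).
Proof. apply: (@nice_trig2 cos) => [x|x y]; [exact: cos_max | exact: lip_cos]. Qed.
Lemma nice_sb : nice (fun a b => sin b).
Proof. apply: (@nice_trig2 sin) => [x|x y]; [exact: sin_max | exact: lip_sin]. Qed.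

Lemma nice_meval n (p : {mpoly R[n]}) (t : 'I_n -> R -> R -> R) :
  (forall i, nice (t i)) -> nice (fun a b => p.@[fun i => t i a b]).
Proof.
move=> ht; apply: nice_ext; first by move=> a b; rewrite mevalE.
apply: nice_sum => m; apply: nice_mul; first exact: nice_cst.
by apply: nice_prod => i; apply: nice_exp.
Qed.

End Nice.
Arguments nice_ca {R}. Arguments nice_sa {R}. Arguments nice_cb {R}. Arguments nice_sb {R}.
Section Frame.
Variable R : realType.
Local Notation P := {mpoly R[3]}.

Definition pt (a b : R) : 'I_3 -> R :=
  fun i => nth 0 [:: cos a; sin a * cos b; sin a * sin b] i.

Definition Fr (a b : R) : 'M[R]_(3,2) := \matrix_(i < 3, k < 2)
  nth 0 (nth [::] [:: [:: sin a; 0]; [:: - (cos a * cos b); sin b];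
                      [:: - (cos a * sin b); - cos b]] i) k.

Definition Jm : 'M[R]_2 := \matrix_(i < 2, j < 2)
  nth 0 (nth [::] [:: [:: 0; 1]; [:: -1; 0]] i) j.

Definition Ap (a b : R) : 'M[R]_3 := map_mx (meval (pt a b)) (matA R).

Lemma pt_x a b : (varx R).@[pt a b] = cos a.
Proof. by rewrite /varx mevalXU /pt inordK. Qed.
Lemma pt_y a b : (vary R).@[pt a b] = sin a * cos b.
Proof. by rewrite /vary mevalXU /pt inordK. Qed.
Lemma pt_z a b : (varz R).@[pt a b] = sin a * sin b.
Proof. by rewrite /varz mevalXU /pt inordK. Qed.

Lemma ApE a b : Ap a b = \matrix_(i < 3, j < 3)
  nth 0 (nth [::] [:: [:: 0; sin a * sin b; - (sin a * cos b)];
                      [:: - (sin a * sin b); 0; cos a];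
                      [:: sin a * cos b; - cos a; 0]] i) j.
Proof.
apply/matrixP => i j; rewrite !mxE.
case: i => [[|[|[|]]] hi] //; case: j => [[|[|[|]]] hj] //=;
  by rewrite ?meval0 ?mevalN ?pt_x ?pt_y ?pt_z.
Qed.

Lemma Ap_frame a b : Ap a b *m Fr a b = Fr a b *m Jm.
Proof.
have h1 := cos2Dsin2 a; have h2 := cos2Dsin2 b.
have k1 : sin a * (cos b ^+ 2 + sin b ^+ 2) = sin a by rewrite h2 mulr1.
have k2 : cos a * (cos b ^+ 2 + sin b ^+ 2) = cos a by rewrite h2 mulr1.
have k3 : sin b * (cos a ^+ 2 + sin a ^+ 2) = sin b by rewrite h1 mulr1.
have k4 : cos b * (cos a ^+ 2 + sin a ^+ 2) = cos b by rewrite h1 mulr1.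
rewrite ApE; apply/matrixP => i k; rewrite !mxE !big_ord_recr !big_ord0 /= !mxE.
case: i => [[|[|[|]]] hi] //; case: k => [[|[|]] hk] //=; nra.
Qed.

Lemma frame_orth a b : (Fr a b)^T *m Fr a b = 1%:M.
Proof.
have h1 := cos2Dsin2 a; have h2 := cos2Dsin2 b.
apply/matrixP => i k; rewrite !mxE !big_ord_recr !big_ord0 /= !mxE.
case: i => [[|[|]] hi] //; case: k => [[|[|]] hk] //= ; nra.
Qed.

Lemma frame_pow a b l : (Fr a b)^T *m (Ap a b ^+ l) *m Fr a b = Jm ^+ l.
Proof.
suff H : Ap a b ^+ l *m Fr a b = Fr a b *m Jm ^+ l.
  by rewrite -mulmxA H mulmxA frame_orth mul1mx.
elim: l => [|l IH]; first by rewrite !expr0 mul1mx mulmx1.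
by rewrite exprSr -mulmxE -mulmxA Ap_frame mulmxA IH -mulmxA mulmxE -exprSr.
Qed.

Lemma det_Jm : \det Jm = 1.
Proof.
rewrite (expand_det_row _ ord0) !big_ord_recr big_ord0 /= /cofactor !det_mx11 !mxE /=.
by rewrite add0n expr1; ring.
Qed.

Lemma det_Jm_pow l : \det (Jm ^+ l) = 1.
Proof.
elim: l => [|l IH]; first by rewrite expr0 det1.
by rewrite exprS -mulmxE det_mulmx IH det_Jm mulr1.
Qed.
End Frame.
Arguments Jm {R}.
Section Main.
Variable R : realType.
Local Notation P := {mpoly R[3]}.

Lemma map_mx_exp n (f : {rmorphism P -> R}) (A : 'M[P]_n) l :
  map_mx f (A ^+ l) = (map_mx f A) ^+ l.
Proof.
elim: l => [|l IH]; first by rewrite !expr0 map_mx1.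
by rewrite !exprS -!mulmxE map_mxM IH.
Qed.

Definition Wm q (U : 'M[P]_(3, q)) a b : 'M[R]_(2, q) :=
  (Fr a b)^T *m map_mx (meval (pt a b)) U.
Definition Zm q (V : 'M[P]_(q, 3)) a b : 'M[R]_(q, 2) :=
  map_mx (meval (pt a b)) V *m Fr a b.

Lemma WZ q l (U : 'M[P]_(3, q)) (V : 'M[P]_(q, 3)) a b :
  matA R ^+ l = U *m V -> Wm U a b *m Zm V a b = Jm ^+ l.
Proof.
move=> hA; rewrite /Wm /Zm mulmxA -(mulmxA _ (map_mx _ U)) -map_mxM -hA.
by rewrite map_mx_exp; exact: (frame_pow a b l).
Qed.

Lemma det2 (M : 'M[R]_2) : \det M = M 0 0 * M 1 1 - M 0 1 * M 1 0.
Proof.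
rewrite (expand_det_row _ ord0) !big_ord_recr big_ord0 /= /cofactor !det_mx11 !mxE /=.
rewrite add0r add0n expr0 expr1 mul1r mulN1r mulrN.
by congr (_ * _ - _ * _); apply: congr2; apply/val_inj.
Qed.

Lemma nice_pt i : nice (fun a b : R => pt a b i).
Proof.
case: i => [[|[|[|]]] hi] //; rewrite /pt /=.
- exact: nice_ca.
- exact: nice_mul nice_sa nice_cb.
- exact: nice_mul nice_sa nice_sb.
Qed.

Lemma nice_ev (p : P) : nice (fun a b : R => p.@[pt a b]).
Proof. exact: (nice_meval p nice_pt). Qed.

Lemma nice_Fr i k : nice (fun a b : R => Fr a b i k).
Proof.
apply: nice_ext; first by move=> a b; rewrite mxE.
case: i => [[|[|[|]]] hi] //; case: k => [[|[|]] hk] //=;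
 try exact: nice_cst; try exact: nice_sa; try exact: nice_sb;
 try exact: nice_opp nice_cb;
 try exact: nice_opp (nice_mul nice_ca nice_cb);
 exact: nice_opp (nice_mul nice_ca nice_sb).
Qed.

Lemma nice_W q (U : 'M[P]_(3, q)) i j : nice (fun a b : R => Wm U a b i j).
Proof.
apply: (@nice_ext _ (fun a b => \sum_r (Fr a b r i * (U r j).@[pt a b]))).
  by move=> a b; rewrite /Wm mxE; apply: eq_bigr => r _; rewrite !mxE.
apply: nice_sum => r; apply: nice_mul.
  exact: nice_Fr.
exact: nice_ev.
Qed.

Lemma nice_Z q (V : 'M[P]_(q, 3)) i j : nice (fun a b : R => Zm V a b i j).
Proof.
apply: (@nice_ext _ (fun a b => \sum_r ((V i r).@[pt a b] * Fr a b r j))).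
  by move=> a b; rewrite /Zm mxE; apply: eq_bigr => r _; rewrite !mxE.
apply: nice_sum => r; apply: nice_mul.
  exact: nice_ev.
exact: nice_Fr.
Qed.

End Main.
Section Aux.
Variable R : realType.

Lemma polar (x y : R) : 0 < x ^+ 2 + y ^+ 2 ->
  exists rho beta, [/\ 0 < rho, x = rho * cos beta & y = rho * sin beta].
Proof.
move=> hpos.
set rho := Num.sqrt (x ^+ 2 + y ^+ 2).
have hr : 0 < rho by rewrite sqrtr_gt0.
have hr2 : rho ^+ 2 = x ^+ 2 + y ^+ 2 by rewrite sqr_sqrtr // ltW.
set c := x / rho.
have hc2 : 1 - c ^+ 2 = (y / rho) ^+ 2.
  by rewrite /c !expr_div_n hr2; field; rewrite gt_eqF.
have hc : -1 <= c <= 1.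
  have : c ^+ 2 <= 1 by rewrite -subr_ge0 hc2 sqr_ge0.
  by move=> h; apply/andP; split; nra.
have hsin : sin (acos c) = `|y| / rho.
  by rewrite sin_acos // hc2 sqrtr_sqr normrM [`|rho^-1|]ger0_norm // invr_ge0 ltW.
have hcos : cos (acos c) = c by rewrite acosK // in_itv /=.
exists rho, (if 0 <= y then acos c else - acos c); split => //.
  by case: ifP; rewrite ?cosN hcos /c mulrC divfK // gt_eqF.
case: ifPn => hy.
  by rewrite hsin ger0_norm // mulrC divfK // gt_eqF.
by rewrite sinN hsin ltr0_norm ?ltNge // mulrN mulrC divfK ?opprK // gt_eqF.
Qed.

Lemma dot_pos (x y : R * R) (e m : R) : 2 * e < m ->
  m <= `|x.1| + `|x.2| -> `|y.1 - x.1| <= e -> `|y.2 - x.2| <= e ->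
  0 < dot x y.
Proof.
case: x => x1 x2; case: y => y1 y2 /= hem hm h1 h2.
rewrite /dot /=.
have e0 : 0 <= e by apply: le_trans h1.
have k1 : - (`|x1| * e) <= x1 * (y1 - x1).
  rewrite lerNl; apply: le_trans (ler_norm _) _; rewrite normrN normrM.
  by apply: ler_wpM2l.
have k2 : - (`|x2| * e) <= x2 * (y2 - x2).
  rewrite lerNl; apply: le_trans (ler_norm _) _; rewrite normrN normrM.
  by apply: ler_wpM2l.
have -> : x1 * y1 + x2 * y2 = x1 ^+ 2 + x2 ^+ 2 + x1 * (y1 - x1) + x2 * (y2 - x2) by ring.
rewrite -(real_normK (num_real x1)) -(real_normK (num_real x2)).
have a1 : 0 <= `|x1| by [].
have a2 : 0 <= `|x2| by [].
move: (`|x1|) (`|x2|) (x1 * (y1 - x1)) (x2 * (y2 - x2)) a1 a2 k1 k2 hm => A1 A2 d1 d2 a1 a2 k1 k2 hm.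
have hS : 0 < A1 + A2 by lra.
have hq : 0 < A1 + A2 - 2 * e by lra.
have q0 := mulr_gt0 hS hq.
have q1 : e * (A1 + A2) < (A1 + A2) * (A1 + A2) / 2 by nra.
have q3 := sqr_ge0 (A1 - A2).
have q2 : (A1 + A2) * (A1 + A2) / 2 <= A1 ^+ 2 + A2 ^+ 2 by nra.
lra.
Qed.
End Aux.
Section Final.
Variable R : realType.
Local Notation P := {mpoly R[3]}.

Lemma o3_0 : widen_ord (leqnSn 2) (widen_ord (leqnSn 1) (@ord_max 0)) = 0 :> 'I_3.
Proof. exact: val_inj. Qed.
Lemma o3_1 : widen_ord (leqnSn 2) (@ord_max 1) = 1 :> 'I_3.
Proof. exact: val_inj. Qed.
Lemma o3_2 : @ord_max 2 = 2%:R :> 'I_3.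
Proof. exact: val_inj. Qed.

Lemma WmE q (U : 'M[P]_(3, q)) a b j :
  Wm U a b 0 j = sin a * (U 0 j).@[pt a b] - cos a * cos b * (U 1 j).@[pt a b]
                 - cos a * sin b * (U 2%:R j).@[pt a b] /\
  Wm U a b 1 j = sin b * (U 1 j).@[pt a b] - cos b * (U 2%:R j).@[pt a b].
Proof.
rewrite /Wm !mxE !big_ord_recr !big_ord0 /= !mxE /= o3_0 o3_1 o3_2.
by split; ring.
Qed.

Lemma Wper q (U : 'M[P]_(3, q)) a : Wm U a (pi *+ 2) = Wm U a 0.
Proof.
rewrite /Wm.
have -> : pt a (pi *+ 2) = pt a 0 by rewrite /pt cos2pi sin2pi cos0 sin0.
have -> : Fr a (pi *+ 2) = Fr a 0.
  by apply/matrixP => i k; rewrite !mxE cos2pi sin2pi cos0 sin0.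
done.
Qed.

Lemma pt_pole0 b : pt 0 b = pt 0 0 :> ('I_3 -> R).
Proof. by rewrite /pt sin0 !mul0r. Qed.
Lemma pt_polepi b : pt pi b = pt pi 0 :> ('I_3 -> R).
Proof. by rewrite /pt sinpi !mul0r. Qed.

Lemma det_le (M : 'M[R]_2) K : `|M 0 0| <= K -> `|M 0 1| <= K ->
  `|M 1 0| <= K -> `|M 1 1| <= K -> `|\det M| <= 2 * K ^+ 2.
Proof.
move=> h1 h2 h3 h4; rewrite det2.
apply: le_trans (ler_normB _ _) _; rewrite !normrM.
have k0 : 0 <= K by apply: le_trans h1.
have := ler_pM (normr_ge0 _) (normr_ge0 _) h1 h4.
have := ler_pM (normr_ge0 _) (normr_ge0 _) h2 h3.
rewrite expr2; lra.
Qed.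

Lemma idx_step (k : nat) (c : R) : 0 <= c ->
  `|k.+1%:R * c - k%:R * c| = c /\ `|k%:R * c - k.+1%:R * c| = c.
Proof.
move=> hc.
have e : k.+1%:R * c - k%:R * c = c by rewrite -natr1 mulrDl mul1r addrAC subrr add0r.
by split; [rewrite e ger0_norm | rewrite distrC e ger0_norm].
Qed.


Lemma sq_pos (x y : R) : 0 < `|x| + `|y| -> 0 < x ^+ 2 + y ^+ 2.
Proof.
rewrite -(real_normK (num_real x)) -(real_normK (num_real y)).
have := normr_ge0 x; have := normr_ge0 y.
move: (`|x|) (`|y|) => A B hA hB h.
have := mulr_gt0 h h; have := sqr_ge0 (A - B); nra.
Qed.

Lemma h2lem (x n p : R) : x * n = p -> 4 < n -> 0 < x -> 2 * x < p / 2.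
Proof. move=> <- h1 h2; nra. Qed.

End Final.
Section Final2.
Variable R : realType.
Local Notation P := {mpoly R[3]}.
Lemma hb4 (a b c d : R) : 0 <= a -> 0 <= b -> 0 <= c -> 0 <= d ->
  [/\ 1 <= 1 + a + b + c + d, a <= 1 + a + b + c + d, b <= 1 + a + b + c + d,
      c <= 1 + a + b + c + d & d <= 1 + a + b + c + d].
Proof. by move=> *; split; lra. Qed.
Lemma hb2 (a b : R) : 0 <= a -> 0 <= b ->
  [/\ 1 <= 1 + a + b, a <= 1 + a + b & b <= 1 + a + b].
Proof. by move=> *; split; lra. Qed.
Lemma hwlem (a b c d M : R) : a * b <= a * M -> c * d <= M * d -> a * b + c * d <= (a + d) * M.
Proof. move=> *; lra. Qed.
Lemma sum3 (x y h : R) : x <= h -> y <= 2 * h -> x + y <= 3 * h.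
Proof. move=> *; lra. Qed.

Lemma main_contra (U : 'M[P]_(3, 2)) (V : 'M[P]_(2, 3)) l :
  matA R ^+ l = U *m V -> False.
Proof.
move=> hA.
have hdet a b : \det (Wm U a b) * \det (Zm V a b) = 1.
  by rewrite -det_mulmx (WZ _ _ hA) det_Jm_pow.
have [Z00 [LZ00 [hZ00 _ bZ00]]] := nice_Z V 0 0.
have [Z01 [LZ01 [hZ01 _ bZ01]]] := nice_Z V 0 1.
have [Z10 [LZ10 [hZ10 _ bZ10]]] := nice_Z V 1 0.
have [Z11 [LZ11 [hZ11 _ bZ11]]] := nice_Z V 1 1.
have [W01 [LW01 [hW01 _ bW01]]] := nice_W U 0 1.
have [W11 [LW11 [hW11 _ bW11]]] := nice_W U 1 1.
have [M00 [L00 [_ hL00 bW00]]] := nice_W U 0 0.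
have [M10 [L10 [_ hL10 bW10]]] := nice_W U 1 0.
have [Mz1 z0b z1b z2b z3b] := hb4 hZ00 hZ01 hZ10 hZ11.
have [Mw1 w0b w1b] := hb2 hW01 hW11.
have [L1 l0b l1b] := hb2 hL00 hL10.
set Mz := 1 + Z00 + Z01 + Z10 + Z11.
set Mw := 1 + W01 + W11.
set L := 1 + L00 + L10.
set K := 2 * Mz ^+ 2 * Mw.
have K0 : 0 < K.
  apply: mulr_gt0; last exact: lt_le_trans ltr01 Mw1.
  by apply: mulr_gt0 => //; apply: exprn_gt0; exact: lt_le_trans ltr01 Mz1.
set m := 1 / K.
have hm : 0 < m by apply: divr_gt0.
have lowb a b : m <= `|Wm U a b 0 0| + `|Wm U a b 1 0|.
  have hZ : `|\det (Zm V a b)| <= 2 * Mz ^+ 2.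
    apply: det_le.
    - by apply: le_trans (bZ00 a b a b).1 z0b.
    - by apply: le_trans (bZ01 a b a b).1 z1b.
    - by apply: le_trans (bZ10 a b a b).1 z2b.
    - by apply: le_trans (bZ11 a b a b).1 z3b.
  have hW : `|\det (Wm U a b)| <= (`|Wm U a b 0 0| + `|Wm U a b 1 0|) * Mw.
    rewrite det2; apply: le_trans (ler_normB _ _) _; rewrite !normrM.
    have g1 : `|Wm U a b 1 1| <= Mw.
      by apply: le_trans (bW11 a b a b).1 w1b.
    have g2 : `|Wm U a b 0 1| <= Mw.
      by apply: le_trans (bW01 a b a b).1 w0b.
    have := ler_wpM2l (normr_ge0 (Wm U a b 0 0)) g1.
    have := ler_wpM2r (normr_ge0 (Wm U a b 1 0)) g2.
    by move=> ha hb; apply: hwlem.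
  have h1 : 1 <= (`|Wm U a b 0 0| + `|Wm U a b 1 0|) * Mw * (2 * Mz ^+ 2).
    rewrite -[X in X <= _](hdet a b).
    apply: le_trans (ler_norm _) _; rewrite normrM.
    by apply: ler_pM.
  rewrite /m ler_pdivrMr // /K; apply: le_trans h1 _; rewrite le_eqVlt; apply/orP; left; apply/eqP; ring.
have lip0 a b a' b' : `|Wm U a b 0 0 - Wm U a' b' 0 0| <= L * (`|a - a'| + `|b - b'|).
  apply: le_trans (bW00 a b a' b').2 _; apply: ler_wpM2r; first by rewrite addr_ge0.
  exact: l0b.
have lip1 a b a' b' : `|Wm U a b 1 0 - Wm U a' b' 1 0| <= L * (`|a - a'| + `|b - b'|).
  apply: le_trans (bW10 a b a' b').2 _; apply: ler_wpM2r; first by rewrite addr_ge0.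
  exact: l1b.
set X := 6 * L * pi / m.
have X0 : 0 <= X.
  apply: divr_ge0; last exact: ltW.
  by apply: mulr_ge0; [apply: mulr_ge0 => //; exact: le_trans ler01 L1 | exact: pi_ge0].
have [N [hX N4]] : exists N : nat, X < N%:R /\ (4 < N)%N.
  exists (5 + Num.truncn X)%N; split; last by rewrite ltn_addr.
  apply: lt_le_trans (archimedean.Num.Theory.real_truncnS_gt (num_real X)) _.
  by rewrite ler_nat addnC addnS ltnS leq_addr.
have N0 : 0 < N%:R :> R by rewrite ltr0n (ltn_trans _ N4).
pose h : R := pi / N%:R.
have hh : 0 < h by rewrite /h divr_gt0 // pi_gt0.
pose phi (j : nat) : R := j%:R * h.
pose th (i : nat) : R := i%:R * (2 * h).
pose e : R := L * (3 * h).
have he : 2 * e < m.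
  have h6 : 6 * L * pi < m * N%:R.
    by move: hX; rewrite /X ltr_pdivrMr // [m * _]mulrC.
  have -> : 2 * e = (6 * L * pi) / N%:R.
    by rewrite /e /h; move: N0; move: (N%:R) => n hn; field; rewrite gt_eqF.
  by rewrite ltr_pdivrMr.
pose Pg i j := (Wm U (phi j) (th i) 0 0, Wm U (phi j) (th i) 1 0).
have pairpos i j i' j' : `|phi j - phi j'| <= h -> `|th i - th i'| <= 2 * h ->
    0 < dot (Pg i j) (Pg i' j').
  move=> h1 h2; apply: (@dot_pos _ (Pg i j) (Pg i' j') e m he (lowb (phi j) (th i))).
    apply: le_trans (lip0 _ _ _ _) _; rewrite /e; apply: ler_wpM2l; first exact: le_trans ler01 L1.
    by rewrite distrC [`|th i' - _|]distrC; exact: sum3.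
  apply: le_trans (lip1 _ _ _ _) _; rewrite /e; apply: ler_wpM2l; first exact: le_trans ler01 L1.
  by rewrite distrC [`|th i' - _|]distrC; exact: sum3.
have hh2 : 0 <= 2 * h by rewrite mulr_ge0 // ltW.
have sp j : `|phi j.+1 - phi j| = h /\ `|phi j - phi j.+1| = h by apply: idx_step; exact: ltW.
have st i : `|th i.+1 - th i| = 2 * h /\ `|th i - th i.+1| = 2 * h by exact: idx_step.
have z0 x : `|x - x| = 0 :> R by rewrite subrr normr0.
have G : \sum_(i < N) del (Pg i 0%N) (Pg i.+1 0%N) = \sum_(i < N) del (Pg i N) (Pg i.+1 N).
  apply: grid_wind => [i j _ _|j].
    have [s1 s2] := sp j; have [t1 t2] := st i.
    by split; apply: pairpos; rewrite ?z0 ?s1 ?s2 ?t1 ?t2 ?lexx ?(ltW hh) ?hh2.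
  rewrite /Pg.
  have -> : th N = pi *+ 2 by rewrite /th /h mulr2n; move: N0; move: (N%:R) => n hn; field; rewrite gt_eqF.
  have -> : th 0%N = 0 by rewrite /th mul0r.
  by rewrite Wper.
have phi0 : phi 0%N = 0 by rewrite /phi mul0r.
have phiN : phi N = pi.
  by rewrite /phi /h; move: N0; move: (N%:R) => n hn; field; rewrite gt_eqF.
have th0 : th 0%N = 0 by rewrite /th mul0r.
have thN : th N = pi *+ 2.
  by rewrite /th /h mulr2n; move: N0; move: (N%:R) => n hn; field; rewrite gt_eqF.
have N4r : 4 < N%:R :> R by rewrite ltr_nat.
have hN : h * N%:R = pi by rewrite /h divfK // gt_eqF.
have h2 : 2 * h < pi / 2 by apply: h2lem hN N4r hh.
have stepok (t : nat -> R) : (forall i, `|t i.+1 - t i| = 2 * h) ->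
    forall i, (i < N)%N -> `|t i.+1 - t i| < pi / 2.
  by move=> ht i _; rewrite ht.
have P0 i : Pg i 0%N = (- ((U 1 0).@[pt 0 0] * cos (th i) + (U 2%:R 0).@[pt 0 0] * sin (th i)),
    (U 1 0).@[pt 0 0] * sin (th i) - (U 2%:R 0).@[pt 0 0] * cos (th i)).
  rewrite /Pg phi0; have [-> ->] := WmE U 0 (th i) 0; rewrite !pt_pole0 sin0 cos0.
  by congr pair; ring.
have pos0 : 0 < (U 1 0).@[pt 0 0] ^+ 2 + (U 2%:R 0).@[pt 0 0] ^+ 2.
  have L0 : m <= `|(Pg 0%N 0%N).1| + `|(Pg 0%N 0%N).2| := lowb _ _.
  rewrite P0 th0 sin0 cos0 /= in L0.
  have := sq_pos (lt_le_trans hm L0).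
  by congr (0 < _); ring.
have [rho [beta [hr hu1 hu2]]] := polar pos0.
have S0 : \sum_(i < N) del (Pg i 0%N) (Pg i.+1 0%N) = 4 * -1.
  have Pt i : Pg i 0%N = (rho * cos (beta - th i + pi), rho * sin (beta - th i + pi)).
    by rewrite P0 hu1 hu2 cosDpi sinDpi cosB sinB; congr pair; ring.
  under eq_bigr => i _ do rewrite !Pt.
  apply: (loop_wind (t := fun i => beta - th i + pi)) => //.
    apply: stepok => i; rewrite (_ : beta - th i.+1 + pi - (beta - th i + pi) = th i - th i.+1).
      exact: (st i).2.
    by ring.
  by rewrite thN th0; ring.
have PN i : Pg i N = ((U 1 0).@[pt pi 0] * cos (th i) + (U 2%:R 0).@[pt pi 0] * sin (th i),
    (U 1 0).@[pt pi 0] * sin (th i) - (U 2%:R 0).@[pt pi 0] * cos (th i)).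
  rewrite /Pg phiN; have [-> ->] := WmE U pi (th i) 0; rewrite !pt_polepi sinpi cospi.
  by congr pair; ring.
have posN : 0 < (U 1 0).@[pt pi 0] ^+ 2 + (U 2%:R 0).@[pt pi 0] ^+ 2.
  have L0 : m <= `|(Pg 0%N N).1| + `|(Pg 0%N N).2| := lowb _ _.
  rewrite PN th0 sin0 cos0 /= in L0.
  have := sq_pos (lt_le_trans hm L0).
  by congr (0 < _); ring.
have [rho' [beta' [hr' hv1 hv2]]] := polar posN.
have SN : \sum_(i < N) del (Pg i N) (Pg i.+1 N) = 4 * 1.
  have Pt i : Pg i N = (rho' * cos (th i - beta'), rho' * sin (th i - beta')).
    by rewrite PN hv1 hv2 cosB sinB; congr pair; ring.
  under eq_bigr => i _ do rewrite !Pt.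
  apply: (loop_wind (t := fun i => th i - beta')) => //.
    apply: stepok => i; rewrite (_ : th i.+1 - beta' - (th i - beta') = th i.+1 - th i).
      exact: (st i).1.
    by ring.
  by rewrite thN th0; ring.
by move: G; rewrite S0 SN.
Qed.

End Final2.
Section Thm.
Variable R : realType.
Local Notation P := {mpoly R[3]}.

Definition rv : 'rV[P]_3 := \row_(j < 3) nth 0 [:: varx R; vary R; varz R] j.

Lemma rvA : rv *m matA R = 0.
Proof.
apply/rowP => j; rewrite !mxE !big_ord_recr big_ord0 /= !mxE.
by case: j => [[|[|[|]]] hj] //=; ring.
Qed.

Lemma detX (T : comNzRingType) n (A : 'M[T]_n) k : \det (A ^+ k) = \det A ^+ k.
Proof.
elim: k => [|k IH]; first by rewrite !expr0 det1.
by rewrite !exprS -mulmxE det_mulmx IH.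
Qed.

Lemma varx_neq0 : varx R != 0.
Proof.
apply/negP => /eqP h.
have := pt_x (0 : R) 0; rewrite h meval0 cos0 => /eqP.
by rewrite eq_sym oner_eq0.
Qed.

Lemma q_le2 q (B : 'M[P]_q) (U : 'M[P]_(3, q)) (V : 'M[P]_(q, 3)) l :
  \det B != 0 -> matA R *m U = U *m B -> B ^+ l = V *m U -> (q <= 2)%N.
Proof.
move=> hB hAU hBl.
have rvU : rv *m U = 0.
  have h1 : (rv *m U) *m B = 0 by rewrite -mulmxA -hAU mulmxA rvA mul0mx.
  have : (rv *m U) *m (B *m \adj B) = 0 by rewrite mulmxA h1 mul0mx.
  rewrite mul_mx_adj mul_mx_scalar => /eqP; rewrite scalemx_eq0 (negbTE hB) /=.
  by move/eqP.
pose f := @FracField.tofrac P.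
have rvUK : map_mx f rv *m map_mx f U = 0 by rewrite -map_mxM rvU map_mx0.
have rvK : map_mx f rv != 0.
  apply/negP => /eqP /rowP /(_ 0); rewrite !mxE /= => /eqP.
  by rewrite tofrac_eq0 (negbTE varx_neq0).
have rkU : (\rank (map_mx f U) <= 2)%N.
  have : (map_mx f rv <= kermx (map_mx f U))%MS by apply/sub_kermxP.
  move/mxrankS; rewrite mxrank_ker rank_rV rvK => h.
  have := rank_leq_col (map_mx f U); lia.
have := mxrankM_maxr (map_mx f V) (map_mx f U).
rewrite -map_mxM -hBl mxrank_unit; first by move=> h; apply: leq_trans h rkU.
rewrite unitmxE det_map_mx unitfE detX.
by rewrite tofrac_eq0 expf_neq0.
Qed.

Lemma q_ge2 q (U : 'M[P]_(3, q)) (V : 'M[P]_(q, 3)) l :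
  matA R ^+ l = U *m V -> (2 <= q)%N.
Proof.
move=> hA.
have := mxrankM_maxl (Wm U 0 0) (Zm V 0 0).
rewrite (WZ _ _ hA) mxrank_unit; last by rewrite unitmxE det_Jm_pow unitr1.
by move=> h; apply: leq_trans h (rank_leq_col _).
Qed.

End Thm.

Theorem theorem1p2 (R : realType) :
  (forall (q : nat) (B : 'M[{mpoly R[3]}]_q),
      nonsingular B -> ~ alg_shift_equiv (matA R) B)
  /\ (forall k : nat, matA R ^+ k != 0).
Proof.
split.
  move=> q B hB [l [U [V [hAU hVA hAl hBl]]]].
  have h1 := q_le2 hB hAU hBl.
  have h2 := q_ge2 hAl.
  have hq : q = 2%N by apply/eqP; rewrite eqn_leq h1 h2.
  subst q; exact: main_contra hAl.
move=> k; apply/negP => /eqP hk.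
have := frame_pow (0 : R) 0 k.
rewrite /Ap -map_mx_exp hk map_mx0 mulmx0 mul0mx => E.
by have := det_Jm_pow R k; rewrite -E det0 => /eqP; rewrite eq_sym oner_eq0.
Qed.
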